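(* Let $q$ be a fixed rational number. Then the set of programs $\{M\mid ME[U](M)>q\}$ is a $(\lfloor 2^q\rfloor+1)$-observable hyperproperty.
   Context: Stores map variables to values; $H$ is the high input variable and $O$ the low output variable. A trace is a sequence of stores. For a finite trace $t$, $t\circ t'$ is concatenation. A program is a set $M$ of infinite traces that is deterministic (two traces with the same initial value of $H$ are equal) and has a finite nonempty input domain $\mathbb{H}_M=\{\sigma_0(H)\}$. Input domains are unbounded in size. $M(h)$ is the output trace $(\sigma_1(O),\sigma_2(O),\dots)$ of the trace of $M$ starting with $H=h$. $\bot$ denotes termination. $M(h)=o$ means that for all $i$, $o_i=\bot$ or $M(h)_i=\bot$ or $M(h)_i=o_i$. For a distribution $\mu$ on $\mathbb{H}_M$, $\mu(O=o)=\sum_{h:M(h)=o}\mu(H=h)$, with conditional probabilities induced accordingly. $U$ is the uniform distribution on $\mathbb{H}_M$. Min-entropy QIF (log base 2): $\mathcal{V}[\mu](X)=\max_x\mu(X=x)$, $\mathcal{V}[\mu](X|Y)=\sum_y\mu(Y=y)\max_x\mu(X=x|Y=y)$, and $ME[\mu](M)=\log\frac1{\mathcal{V}[\mu](H)}-\log\frac1{\mathcal{V}[\mu](H|O)}$. $\mathit{Prop}$ is the set of programs; $\mathit{Obs}$ is the set of deterministic finite sets of finite traces. For $S\in\mathit{Obs}$ and $T\in\mathit{Prop}$, $S\le T$ iff every $t\in S$ has some $t'$ with $t\circ t'\in T$. $P\subseteq\mathit{Prop}$ is $k$-observable iff for every $S\in P$ there is $T\in\mathit{Obs}$ with $T\le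 S$ and $|T|\le k$ such that every $S'\in\mathit{Prop}$ with $T\le S'$ is in $P$. *)

(* Defs.v *)
From HB Require Import structures.
From mathcomp Require Import all_boot all_order all_algebra.
From mathcomp Require Import finmap boolp classical_sets functions cardinality fsbigop reals exp.
Set Implicit Arguments. Unset Strict Implicit. Unset Printing Implicit Defensive.
Import Order.TTheory GRing.Theory Num.Theory.
Local Open Scope classical_set_scope.
Local Open Scope ring_scope.

Section QIF.
Context (R : realType) (Var : Type) (Val : choiceType).
(* H : high input variable, O : low output variable, bot : the value denoting termination *)
Context (H O : Var) (bot : Val).

Definition store := Var -> Val.
Definition trace := nat -> store.
Definition ftrace := seq store.

Definition tcat (t : ftrace) (t' : trace) : trace :=
  fun i => if (i < size t)%N then nth (t' 0%N) t i else t' (i - size t)%N.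

Definition deterministic (M : set trace) : Prop :=
  forall s s', M s -> M s' -> s 0%N H = s' 0%N H -> s = s'.

Definition inputs (M : set trace) : set Val := [set s 0%N H | s in M].

Definition is_program (M : set trace) : Prop :=
  [/\ deterministic M, finite_set (inputs M) & inputs M !=set0].

Definition fdeterministic (S : set ftrace) : Prop :=
  forall x y t t', S (x :: t) -> S (y :: t') -> x H = y H -> x :: t = y :: t'.

Definition is_obs (S : set ftrace) : Prop := finite_set S /\ fdeterministic S.

Definition obs_le (S : set ftrace) (T : set trace) : Prop :=
  forall t, S t -> exists t', T (tcat t t').

Definition k_observable (k : nat) (P : set (set trace)) : Prop :=
  forall S, P S -> exists T : set ftrace,
    [/\ is_obs T, obs_le T S, (#|` fset_set T | <= k)%N &
        forall S', is_program S' -> obs_le T S' -> P S'].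

Definition out (M : set trace) (h : Val) : nat -> Val :=
  let s := xget (fun _ _ => bot) [set s | M s /\ s 0%N H = h] in
  fun i => s i.+1 O.

(* "M(h) = o" *)
Definition out_match (a o : nat -> Val) : Prop :=
  forall i, o i = bot \/ a i = bot \/ a i = o i.

Definition outputs (M : set trace) : set (nat -> Val) := [set out M h | h in inputs M].

Definition uniform (M : set trace) : Val -> R := fun _ => (#|` fset_set (inputs M) |%:R)^-1.

Definition prHO (mu : Val -> R) M h o : R :=
  if `[< out_match (out M h) o >] then mu h else 0.
Definition prO (mu : Val -> R) M o : R := \sum_(h \in inputs M) prHO mu M h o.

Definition VH (mu : Val -> R) M : R := \big[Num.max/0]_(h \in inputs M) mu h.
Definition VHO (mu : Val -> R) M : R :=
  \sum_(o \in outputs M)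
     prO mu M o * \big[Num.max/0]_(h \in inputs M) (prHO mu M h o / prO mu M o).

Definition log2 (x : R) : R := ln x / ln 2.

Definition ME (mu : Val -> R) M : R :=
  log2 (VH mu M)^-1 - log2 (VHO mu M)^-1.

End QIF.

(* Main.v *)
Require Import Defs.
From HB Require Import structures.
From mathcomp Require Import all_boot all_order all_algebra.
From mathcomp Require Import finmap boolp classical_sets functions cardinality fsbigop reals exp.
From mathcomp Require Import ring lra.
Import Order.TTheory GRing.Theory Num.Theory.
Local Open Scope classical_set_scope.
Local Open Scope ring_scope.

Lemma bigmax_c (R : realType) (T : eqType) (r : seq T) (F : T -> R) c : 0 <= c ->
  (forall i, F i = 0 \/ F i = c) -> (exists2 i, i \in r & F i = c) ->
  \big[Num.max/0]_(i <- r) F i = c.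
Proof.
move=> c0 Fc [j jr Fj].
apply/eqP; rewrite eq_le; apply/andP; split.
  elim: r {jr} => [|x r IH]; first by rewrite big_nil.
  by rewrite big_cons ge_max IH andbT; case: (Fc x) => ->.
elim: r jr => [//|x r IH]; rewrite in_cons big_cons le_max => /orP[/eqP<-|/IH->];
  by rewrite ?Fj ?lexx ?orbT.
Qed.

Section S.
Context (R : realType) (Var : Type) (Val : choiceType) (H O : Var) (bot : Val).
Variable M : set (trace Var Val).
Hypothesis HM : is_program H M.

Lemma out_spec h s : M s -> s 0%N H = h -> out H O bot M h = fun i => s i.+1 O.
Proof.
move=> Ms sh; rewrite /out.
have ex : exists x, [set s | M s /\ s 0%N H = h] x by exists s.
have [Mx xh] := xgetPex (fun _ _ => bot) ex.
case: HM => det _ _.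
by rewrite (det _ _ Mx Ms (etrans xh (esym sh))).
Qed.

Let fin := let: And3 _ f _ := HM in f.
Let I := fset_set (inputs H M).
Let n := #|` I|.

Lemma n_gt0 : (0 < n)%N.
Proof.
case: HM => _ f [h0 h0i]; rewrite /n cardfs_gt0; apply/negP => /eqP I0.
have : h0 \in I by rewrite in_fset_set // mem_set.
by rewrite I0 inE.
Qed.

Let mu := uniform R H M.
Lemma muE h : mu h = (n%:R)^-1. Proof. by []. Qed.

Lemma mu_gt0 h : 0 < mu h.
Proof. by rewrite muE invr_gt0 ltr0n n_gt0. Qed.

Lemma VHE : VH H mu M = (n%:R)^-1.
Proof.
rewrite /VH; apply: bigmax_c; first by rewrite invr_ge0 ler0n.
  by move=> i; right.
case: HM => _ f [h0 h0i]; exists h0 => //.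
rewrite in_finite_support; last exact: finite_setIl.
by apply: mem_set; split => //=; apply/eqP; rewrite gt_eqF // mu_gt0.
Qed.

Lemma prHO_val h o : prHO H O bot mu M h o = 0 \/ prHO H O bot mu M h o = (n%:R)^-1.
Proof. by rewrite /prHO; case: ifP => _; [right|left]. Qed.

Lemma prO_ge h0 : inputs H M h0 -> (n%:R)^-1 <= prO H O bot mu M (out H O bot M h0).
Proof.
move=> h0i; rewrite /prO fsbig_finite //.
rewrite (bigD1_seq h0) ?fset_uniq //=; last by rewrite in_fset_set // mem_set.
rewrite {1}/prHO asboolT; last by move=> i; right; right.
rewrite lerDl; apply: sumr_ge0 => i _; case: (prHO_val i (out H O bot M h0)) => ->//.
by rewrite invr_ge0 ler0n.
Qed.

Lemma term_o o : outputs H O bot M o ->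
  prO H O bot mu M o * \big[Num.max/0]_(h \in inputs H M) (prHO H O bot mu M h o / prO H O bot mu M o)
  = (n%:R)^-1.
Proof.
move=> [h0 h0i <-].
set p := prO _ _ _ _ _ _.
have pg : 0 < p.
  by apply: (lt_le_trans _ (@prO_ge h0 h0i)); rewrite invr_gt0 ltr0n n_gt0.
rewrite (@bigmax_c _ _ _ _ ((n%:R)^-1 / p)).
- by rewrite mulrCA divff ?mulr1 // gt_eqF.
- by rewrite divr_ge0 ?invr_ge0 ?ler0n // ltW.
- by move=> i; case: (prHO_val i (out H O bot M h0)) => ->; [left; rewrite mul0r|right].
exists h0; last by rewrite /prHO asboolT //; move=> i; right; right.
rewrite in_finite_support; last exact: finite_setIl.
apply: mem_set; split => //=; apply/eqP.
rewrite /prHO asboolT; last by move=> i; right; right.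
by rewrite gt_eqF // divr_gt0 // invr_gt0 ltr0n n_gt0.
Qed.

Let outs := fset_set (outputs H O bot M).
Lemma fin_out : finite_set (outputs H O bot M).
Proof. exact: finite_image. Qed.

Lemma VHOE : VHO H O bot mu M = (n%:R)^-1 *+ #|` outs|.
Proof.
rewrite /VHO fsbig_finite; last exact: fin_out.
rewrite (eq_big_seq (fun _ => (n%:R)^-1)); last first.
  move=> o; rewrite in_fset_set; last exact: fin_out.
  by move=> /set_mem; apply: term_o.
by rewrite big_const_seq count_predT iter_addr_0.
Qed.

Lemma outs_gt0 : (0 < #|` outs|)%N.
Proof.
case: HM => _ f [h0 h0i]; rewrite cardfs_gt0; apply/negP => /eqP I0.
have : out H O bot M h0 \in outs by rewrite in_fset_set ?mem_set //; [exists h0|exact: fin_out].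
by rewrite I0 inE.
Qed.

Lemma MEE : ME H O bot mu M = ln ((#|` outs|)%:R : R) / ln 2.
Proof.
have n0 : (0:R) < n%:R by rewrite ltr0n n_gt0.
have m0 : (0:R) < (#|` outs|)%:R by rewrite ltr0n outs_gt0.
rewrite /ME VHE VHOE /log2 invrK.
have -> : ((n%:R : R)^-1 *+ #|` outs|)^-1 = (#|` outs|%:R)^-1 * n%:R.
  have e : (n%:R : R)^-1 *+ #|` outs| = (n%:R)^-1 * #|` outs|%:R by rewrite mulr_natr.
  by rewrite e invfM invrK mulrC.
rewrite lnM ?posrE ?invr_gt0 // lnV ?posrE //.
rewrite -mulrBl; congr (_ * _); ring.
Qed.

End S.
Lemma seq_bound (A : eqType) (s : seq A) (P : nat -> A -> Prop) :
  (forall N N' a, (N <= N')%N -> P N a -> P N' a) ->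
  (forall a, a \in s -> exists N, P N a) -> exists N, forall a, a \in s -> P N a.
Proof.
move=> mono; elim: s => [|x s IH] hs; first by exists 0%N.
have [N1 h1] := hs x (mem_head _ _).
have [N2 h2] : exists N, forall a, a \in s -> P N a.
  by apply: IH => a aS; apply: hs; rewrite in_cons aS orbT.
exists (maxn N1 N2) => a; rewrite in_cons => /orP[/eqP->|aS].
  by apply: mono h1; rewrite leq_maxl.
by apply: mono (h2 _ aS); rewrite leq_maxr.
Qed.

Lemma tcat_pre (Var : Type) (Val : choiceType) (s : trace Var Val) n :
  tcat (mkseq s n) (fun i => s (i + n)%N) = s.
Proof.
apply: funext => i; rewrite /tcat size_mkseq; case: ltnP => hi.
  by rewrite nth_mkseq.
by rewrite subnK.
Qed.

Lemma tcat_lt (Var : Type) (Val : choiceType) (t : ftrace Var Val) (t' : trace Var Val) i : (i < size t)%N -> forall x0, tcat t t' i = nth x0 t i.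
Proof. by move=> hi x0; rewrite /tcat hi; apply: set_nth_default. Qed.

Lemma thr (R : realType) (q : rat) (m : nat) : (0 < m)%N ->
  (ratr q < ln (m%:R : R) / ln 2) <-> (`|Num.floor (powR (2 : R) (ratr q))|.+1 <= m)%N.
Proof.
move=> m0.
have l2 : 0 < ln (2:R) by apply: ln_gt0; rewrite ltr1n.
have p0 : 0 < powR (2 : R) (ratr q) by apply: powR_gt0.
have m0' : (0:R) < m%:R by rewrite ltr0n.
rewrite ltr_pdivlMr // -ln_powR ltr_ln ?posrE //.
have fge : 0 <= Num.floor (powR (2 : R) (ratr q)) by rewrite leNgt floor_lt0 -leNgt ltW.
have -> : (m%:R : R) = (m%:Z)%:~R by [].
rewrite -floor_lt_int -{1}(gez0_abs fge).
rewrite ltz_nat; split; by [].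
Qed.

Theorem theorem10 (R : realType) (Var : Type) (Val : choiceType)
    (H O : Var) (bot : Val) (q : rat) :
  k_observable H (`|Num.floor (powR (2 : R) (ratr q))|%N).+1
    [set M | is_program H M /\ ME H O bot (uniform R H M) M > ratr q].
Proof.
set k := (`|Num.floor _|%N).+1.
move=> M [HM MEq].
have fin_out S : is_program H S -> finite_set (outputs H O bot S).
  by case=> _ f _; exact: finite_image.
set Os := fset_set (outputs H O bot M).
have km : (k <= #|` Os|)%N.
  by apply/thr; [exact: outs_gt0 | rewrite -MEE].
set os := take k Os.
have os_uniq : uniq os by apply: take_uniq; exact: fset_uniq.
have os_size : size os = k by rewrite size_takel.
have osO o : o \in os -> outputs H O bot M o.
  move=> /mem_take; rewrite in_fset_set; [exact: set_mem | exact: fin_out].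
pose tr o := xget (fun _ _ => bot) [set s | M s /\ out H O bot M (s 0%N H) = o].
have trP o : o \in os -> M (tr o) /\ out H O bot M (tr o 0%N H) = o.
  move=> /osO [h [s1 Ms <-] <-].
  have ex : exists s0, [set s | M s /\ out H O bot M (s 0%N H) = out H O bot M (s1 0%N H)] s0.
    by exists s1.
  exact: (xgetPex (fun _ _ => bot) ex).
have trE o : o \in os -> o = fun i => tr o i.+1 O.
  move=> oo; have [Ms e] := trP o oo.
  by rewrite -{1}e (@out_spec _ _ H O bot M HM _ _ Ms erefl).
have [N hN] : exists N, forall o, o \in os -> forall o', o' \in os ->
    o != o' -> exists2 j, (j < N)%N & o j != o' j.
  apply: (@seq_bound _ os (fun N o => forall o', o' \in os ->
    o != o' -> exists2 j, (j < N)%N & o j != o' j)).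
    move=> N1 N2 a le h o' o'i ne; have [j jl jn] := h o' o'i ne.
    by exists j => //; apply: leq_trans le.
  move=> o _; apply: (@seq_bound _ os (fun N o' =>
    o != o' -> exists2 j, (j < N)%N & o j != o' j)).
    move=> N1 N2 a le h ne; have [j jl jn] := h ne.
    by exists j => //; apply: leq_trans le.
  move=> o' _; case: (pselect (exists j, o j != o' j)) => [[j jn]|nj].
    by exists j.+1 => _; exists j.
  exists 0%N => /eqP ne; exfalso; apply: ne; apply/funext => j.
  by case: (eqVneq (o j) (o' j)) => // jn; exfalso; apply: nj; exists j.
pose pre o := mkseq (tr o) N.+1.
pose Tf := [fset pre o | o in os]%fset.
exists [set` Tf]; split.
- split; first exact: finite_fset.
  move=> x y t t' /imfsetP [o oo e1] /imfsetP [o' oo' e2] xy.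
  rewrite e1 e2; congr pre.
  have ex : x = tr o 0%N by move: e1; rewrite /pre /mkseq /= => -[].
  have ey : y = tr o' 0%N by move: e2; rewrite /pre /mkseq /= => -[].
  have [_ <-] := trP o oo; have [_ <-] := trP o' oo'.
  by rewrite -ex -ey xy.
- move=> t /imfsetP [o oo ->]; exists (fun i => tr o (i + N.+1)%N).
  by rewrite tcat_pre; case: (trP o oo).
- rewrite set_fsetK; apply: leq_trans (leq_imfset_card _ _ _) _.
  rewrite (perm_size (uniq_perm (enum_finmem_uniq _) os_uniq _)) ?os_size //.
  by move=> x; rewrite enum_finmemE.
- move=> S' HS' le.
  split => //; rewrite (@MEE R _ _ H O bot S' HS'); apply/thr; first exact: (@outs_gt0 _ _ H O bot S' HS').
  pose g o := out H O bot S' (tr o 0%N H).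
  have gP o : o \in os -> outputs H O bot S' (g o) /\ forall j, (j < N)%N -> g o j = o j.
    move=> oo.
    have [t' St'] : exists t', S' (tcat (pre o) t').
      by apply: le; apply/imfsetP; exists o.
    set u := tcat (pre o) t' in St'.
    have uE i : (i <= N)%N -> u i = tr o i.
      move=> iN; rewrite /u (@tcat_lt _ _ _ _ _ _ (tr o 0%N)); last by rewrite size_mkseq.
      by rewrite nth_mkseq.
    have u0 : u 0%N H = tr o 0%N H by rewrite uE.
    have gE : g o = fun i => u i.+1 O by rewrite /g -u0 (@out_spec _ _ H O bot S' HS' _ _ St' erefl).
    split.
      by exists (tr o 0%N H); [exists u | ].
    move=> j jN; rewrite gE (trE o oo) /= uE //.
  have inj : {in os &, injective g}.
    move=> o1 o2 o1i o2i eg; apply/eqP; apply/negPn/negP => ne.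
    have [j jN jn] := hN o1 o1i o2 o2i ne.
    have [_ e1] := gP o1 o1i; have [_ e2] := gP o2 o2i.
    by move: jn; rewrite -(e1 j jN) -(e2 j jN) eg eqxx.
  have card_g : #|` [fset g o | o in os]%fset| = k.
    rewrite card_in_imfset; last by move=> x y /= xi yi; apply: inj.
    rewrite (perm_size (uniq_perm (enum_finmem_uniq _) os_uniq _)) ?os_size //.
    by move=> x; rewrite enum_finmemE.
  suff : (k <= #|` fset_set (outputs H O bot S')|)%N by [].
  rewrite -card_g; apply: fsubset_leq_card; apply/fsubsetP => x /imfsetP [o oo ->].
  rewrite in_fset_set; last exact: fin_out.
  by apply: mem_set; case: (gP o oo).
Qed.
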